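(* Let $0<\theta_m<\theta_M$, $\Theta=(\theta_m,\theta_M)$, $\alpha>0$, $r>0$. Suppose $v(x,t)$ is a smooth function satisfying, at some point $(x_0,t_0)$, $v_t(x_0,t_0)-H(\partial_xv(x_0,t_0))=-a$ for some $a>0$. Set $\lambda=\partial_xv(x_0,t_0)$, let $Q(\theta)>0$ be the normalized eigenfunction associated with $H(\lambda)$ (see context), and define $v^\varepsilon(x,\theta,t)=v(x,t)+\varepsilon\ln Q(\theta)$. Then there exist positive constants $s,\varepsilon_1$ such that for all $(x,t)\in B_s(x_0,t_0)$, all $\theta\in\Theta$ and all $0<\varepsilon\le\varepsilon_1$, $$v^\varepsilon_t-\varepsilon\theta v^\varepsilon_{xx}-\theta(v^\varepsilon_x)^2-\frac{\alpha}{\varepsilon}v^\varepsilon_{\theta\theta}-\frac{\alpha}{\varepsilon^2}(v^\varepsilon_\theta)^2-r\le-\frac a2,$$ where all terms are evaluated at $(x,\theta,t)$.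
   Context: $H:\mathbb{R}\to\mathbb{R}$ and $Q$: for each $\lambda\in\mathbb{R}$, $H(\lambda)$ is the unique real number for which there exists $Q=Q(\cdot,\lambda)>0$ on $\bar\Theta$ with $\int_\Theta Q\,d\theta=1$, $(-H(\lambda)+\theta\lambda^2+r)Q+\alpha Q''=0$ on $\Theta$ and $Q'(\theta_m)=Q'(\theta_M)=0$ (and $Q$ is then unique). *)

(* Defs.v *)
From Stdlib Require Import Reals.
From Coquelicot Require Import Coquelicot.
Open Scope R_scope.

Definition pderiv (n m : nat) (v : R -> R -> R) : R -> R -> R :=
  fun x t => Derive_n (fun x' => Derive_n (fun t' => v x' t') m t) n x.

Definition smooth2 (v : R -> R -> R) : Prop :=
  forall (n m : nat) (x t : R),
    ex_derive (fun x' => pderiv n m v x' t) x /\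
    ex_derive (fun t' => pderiv n m v x t') t /\
    continuous (fun p : R * R => pderiv n m v (fst p) (snd p)) (x, t).

(* (h, q) is the principal eigenpair of the context for parameter lam:
   q > 0 on [thm, thM], q continuous on [thm, thM], int_Theta q = 1,
   (-h + theta lam^2 + r) q + alpha q'' = 0 on Theta = (thm, thM),
   q'(thm) = q'(thM) = 0 (one-sided derivatives at the endpoints). *)
Definition eigenpair (alpha r thm thM lam h : R) (q : R -> R) : Prop :=
  (forall th, thm <= th <= thM -> 0 < q th) /\
  (forall th, thm <= th <= thM ->
     filterlim q (within (fun y => thm <= y <= thM) (locally th)) (locally (q th))) /\
  is_RInt q thm thM 1 /\
  (forall th, thm < th < thM ->
     ex_derive q th /\ ex_derive (Derive q) th /\
     (- h + th * lam ^ 2 + r) * q th + alpha * Derive (Derive q) th = 0) /\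
  filterlim (fun e => (q (thm + e) - q thm) / e) (at_right 0) (locally 0) /\
  filterlim (fun e => (q (thM + e) - q thM) / e) (at_left 0) (locally 0).

(* Main.v *)
Require Import Defs.
From Stdlib Require Import Reals Lra Psatz.
From Coquelicot Require Import Coquelicot.
Open Scope R_scope.

Lemma Derive_plus_cst (f : R -> R) (c x : R) :
  ex_derive f x -> Derive (fun y => f y + c) x = Derive f x.
Proof.
  intros Hf. rewrite Derive_plus; [rewrite Derive_const; ring | exact Hf |].
  apply (ex_derive_const (K:=R_AbsRing) (V:=R_NormedModule)).
Qed.

Lemma is_derive_lnq (q : R -> R) (c eps th : R) :
  0 < q th -> ex_derive q th ->
  is_derive (fun y => c + eps * ln (q y)) th (eps * (Derive q th / q th)).
Proof.
  intros Hq Hd.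
  replace (eps * (Derive q th / q th)) with (plus zero (eps * (Derive q th * / q th))).
  2:{ unfold plus, zero; simpl; unfold Rdiv; ring. }
  apply (is_derive_plus (fun _ => c) (fun y => eps * ln (q y))).
  - apply (is_derive_const (K:=R_AbsRing) (V:=R_NormedModule)).
  - apply is_derive_scal.
    apply (is_derive_comp ln q th (/ q th) (Derive q th)).
    + apply is_derive_ln; exact Hq.
    + apply Derive_correct; exact Hd.
Qed.

Lemma cont_ext (f : R * R -> R) (x0 t0 e : R) :
  continuous f (x0, t0) -> 0 < e ->
  exists d, 0 < d /\ forall x t, Rabs (x - x0) < d -> Rabs (t - t0) < d ->
     Rabs (f (x, t) - f (x0, t0)) < e.
Proof.
  intros Hc He.
  destruct (proj1 (filterlim_locally f (f (x0,t0))) Hc (mkposreal e He)) as [d Hd].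
  exists d. split; [apply cond_pos|].
  intros x t Hx Ht. apply (Hd (x,t)). split; [exact Hx|exact Ht].
Qed.

Lemma sq_abs_lt (u s : R) : 0 < s -> u ^ 2 < s ^ 2 -> Rabs u < s.
Proof.
  intros Hs Hu. rewrite <- pow2_abs in Hu. pose proof (Rabs_pos u).
  destruct (Rlt_dec (Rabs u) s) as [h|h]; [exact h|].
  apply Rnot_lt_le in h. nra.
Qed.

Theorem lemma4p3 (thm thM alpha r : R) (H : R -> R) (Q : R -> R -> R)
  (v : R -> R -> R) (x0 t0 a : R) :
  0 < thm -> thm < thM -> 0 < alpha -> 0 < r ->
  (forall lam : R, eigenpair alpha r thm thM lam (H lam) (fun th => Q th lam)) ->
  smooth2 v -> 0 < a ->
  Derive (fun t => v x0 t) t0 - H (Derive (fun x => v x t0) x0) = - a ->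
  let lam := Derive (fun x => v x t0) x0 in
  let veps := fun (eps x th t : R) => v x t + eps * ln (Q th lam) in
  exists s eps1 : R, 0 < s /\ 0 < eps1 /\
    forall x th t eps : R,
      (x - x0) ^ 2 + (t - t0) ^ 2 < s ^ 2 -> thm < th < thM -> 0 < eps <= eps1 ->
      Derive (fun t' => veps eps x th t') t
      - eps * th * Derive (fun x' => Derive (fun x'' => veps eps x'' th t) x') x
      - th * (Derive (fun x' => veps eps x' th t) x) ^ 2
      - alpha / eps * Derive (fun th' => Derive (fun th'' => veps eps x th'' t) th') th
      - alpha / eps ^ 2 * (Derive (fun th' => veps eps x th' t) th) ^ 2
      - r <= - (a / 2).
Proof.
  intros Hthm HthM Hal Hr Heig Hsm Ha Hv0 lam veps.
  set (vt := fun x t => Derive (fun t' => v x t') t).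
  set (vx := fun x t => Derive (fun x' => v x' t) x).
  set (vxx := fun x t => Derive (fun x' => Derive (fun x'' => v x'' t) x') x).
  assert (Ct : continuous (fun p : R * R => vt (fst p) (snd p)) (x0, t0))
    by exact (proj2 (proj2 (Hsm 0%nat 1%nat x0 t0))).
  assert (Cx : continuous (fun p : R * R => vx (fst p) (snd p)) (x0, t0))
    by exact (proj2 (proj2 (Hsm 1%nat 0%nat x0 t0))).
  assert (Cxx : continuous (fun p : R * R => vxx (fst p) (snd p)) (x0, t0))
    by exact (proj2 (proj2 (Hsm 2%nat 0%nat x0 t0))).
  set (M := Rabs (vxx x0 t0) + 1).
  set (del := Rmin 1 (a / (8 * thM * (2 * Rabs lam + 1)))).
  assert (HM : 0 < M) by (unfold M; pose proof (Rabs_pos (vxx x0 t0)); lra).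
  assert (Hl1 : 0 < 2 * Rabs lam + 1) by (pose proof (Rabs_pos lam); lra).
  assert (Hdel : 0 < del).
  { unfold del; apply Rmin_glb_lt; [lra|].
    apply Rdiv_lt_0_compat; [lra|]. apply Rmult_lt_0_compat; [|lra]. lra. }
  destruct (cont_ext _ x0 t0 (a/8) Ct ltac:(lra)) as [d1 [Hd1 D1]].
  destruct (cont_ext _ x0 t0 del Cx Hdel) as [d2 [Hd2 D2]].
  destruct (cont_ext _ x0 t0 1 Cxx ltac:(lra)) as [d3 [Hd3 D3]].
  simpl in D1, D2, D3.
  exists (Rmin d1 (Rmin d2 d3)), (a / (8 * thM * M)).
  split; [repeat apply Rmin_glb_lt; assumption|].
  split; [apply Rdiv_lt_0_compat; [lra| apply Rmult_lt_0_compat; lra]|].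
  intros x th t eps Hball Hth Heps.
  assert (Hs1 : Rmin d1 (Rmin d2 d3) <= d1) by apply Rmin_l.
  assert (Hs2 : Rmin d1 (Rmin d2 d3) <= d2)
    by (eapply Rle_trans; [apply Rmin_r|apply Rmin_l]).
  assert (Hs3 : Rmin d1 (Rmin d2 d3) <= d3)
    by (eapply Rle_trans; [apply Rmin_r|apply Rmin_r]).
  assert (Hsp : 0 < Rmin d1 (Rmin d2 d3)) by (repeat apply Rmin_glb_lt; assumption).
  assert (Hax : Rabs (x - x0) < Rmin d1 (Rmin d2 d3)).
  { apply sq_abs_lt; [lra|]. pose proof (pow2_ge_0 (t - t0)). lra. }
  assert (Hat : Rabs (t - t0) < Rmin d1 (Rmin d2 d3)).
  { apply sq_abs_lt; [lra|]. pose proof (pow2_ge_0 (x - x0)). lra. }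
  specialize (D1 x t ltac:(lra) ltac:(lra)).
  specialize (D2 x t ltac:(lra) ltac:(lra)).
  specialize (D3 x t ltac:(lra) ltac:(lra)).
  destruct (Heig lam) as [Qpos [_ [_ [Qder _]]]].
  set (q := fun th => Q th lam) in *.
  assert (Hqth : 0 < q th) by (apply Qpos; lra).
  destruct (Qder th Hth) as [Hq1 [Hq2d Heq]].
  assert (E1 : Derive (fun t' => veps eps x th t') t = vt x t).
  { unfold veps. apply Derive_plus_cst. exact (proj1 (proj2 (Hsm 0%nat 0%nat x t))). }
  assert (E2 : forall x', Derive (fun x'' => veps eps x'' th t) x' = vx x' t).
  { intro x'. unfold veps. apply Derive_plus_cst. exact (proj1 (Hsm 0%nat 0%nat x' t)). }
  assert (E3 : Derive (fun x' => Derive (fun x'' => veps eps x'' th t) x') x = vxx x t).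
  { unfold vxx. apply Derive_ext. exact E2. }
  assert (E4 : forall y, thm < y < thM ->
     Derive (fun th' => veps eps x th' t) y = eps * (Derive q y / q y)).
  { intros y Hy. apply is_derive_unique.
    exact (is_derive_lnq q (v x t) eps y (Qpos y ltac:(lra)) (proj1 (Qder y Hy))). }
  assert (E5 : Derive (fun th' => Derive (fun th'' => veps eps x th'' t) th') th
     = eps * ((Derive (Derive q) th * q th - Derive q th * Derive q th) / q th ^ 2)).
  { apply is_derive_unique.
    apply (is_derive_ext_loc (fun th' => eps * (Derive q th' / q th'))).
    - assert (Hm : 0 < Rmin (th - thm) (thM - th)) by (apply Rmin_glb_lt; lra).
      exists (mkposreal _ Hm). intros y Hy. simpl in Hy.
      change (Rabs (y - th) < Rmin (th - thm) (thM - th)) in Hy.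
      pose proof (Rmin_l (th - thm) (thM - th)). pose proof (Rmin_r (th - thm) (thM - th)).
      apply Rabs_def2 in Hy.
      symmetry. apply E4. lra.
    - apply is_derive_scal. apply is_derive_div.
      + apply Derive_correct; exact Hq2d.
      + apply Derive_correct; exact Hq1.
      + lra. }
  rewrite E1, E3, E4 by lra. rewrite E2, E5.
  set (q0 := q th) in *. set (q1 := Derive q th) in *. set (q2 := Derive (Derive q) th) in *.
  assert (Hkey : alpha / eps * (eps * ((q2 * q0 - q1 * q1) / q0 ^ 2))
      + alpha / eps ^ 2 * (eps * (q1 / q0)) ^ 2 = H lam - th * lam ^ 2 - r).
  { change (Q th lam) with q0 in Heq.
    assert (Hq2 : alpha * q2 = (H lam - th * lam ^ 2 - r) * q0) by lra.
    replace (H lam - th * lam ^ 2 - r) with (alpha * q2 / q0).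
    - field; split; lra.
    - rewrite Hq2; field; lra. }
  assert (Hvt0 : vt x0 t0 = H lam - a) by (change (Derive (fun x => v x t0) x0) with lam in Hv0; unfold vt; lra).
  assert (Hvx0 : vx x0 t0 = lam) by reflexivity.
  rewrite Hvt0 in D1. rewrite Hvx0 in D2.
  apply Rabs_def2 in D1. apply Rabs_def2 in D2.
  assert (Bxx : Rabs (vxx x t) <= M).
  { unfold M. replace (vxx x t) with ((vxx x t - vxx x0 t0) + vxx x0 t0) by ring.
    eapply Rle_trans; [apply Rabs_triang|]. lra. }
  assert (Hth0 : 0 < th) by lra.
  assert (B1 : - (eps * th * vxx x t) <= a / 8).
  { assert (HB : eps * th * Rabs (vxx x t) <= (a / (8 * thM * M)) * thM * M).
    { apply Rmult_le_compat.
      - apply Rmult_le_pos; lra.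
      - apply Rabs_pos.
      - apply Rmult_le_compat; lra.
      - exact Bxx. }
    replace (a / (8 * thM * M) * thM * M) with (a / 8) in HB by (field; lra).
    pose proof (Rle_abs (- vxx x t)) as HA. rewrite Rabs_Ropp in HA.
    assert (0 <= eps * th) by (apply Rmult_le_pos; lra). nra. }
  set (w := vx x t) in *. set (K := 2 * Rabs lam + 1) in *.
  assert (Hdk : del * K <= a / (8 * thM)).
  { assert (del <= a / (8 * thM * K)) by apply Rmin_r.
    replace (a / (8 * thM)) with (a / (8 * thM * K) * K) by (field; lra). nra. }
  assert (B2 : lam ^ 2 - w ^ 2 <= del * K).
  { assert (Rabs (lam + w) <= K).
    { unfold K. replace (lam + w) with ((w - lam) + 2 * lam) by ring.
      eapply Rle_trans; [apply Rabs_triang|].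
      rewrite Rabs_mult, (Rabs_right 2) by lra.
      assert (Rabs (w - lam) <= 1).
      { apply Rabs_le. assert (del <= 1) by apply Rmin_l. lra. }
      lra. }
    replace (lam ^ 2 - w ^ 2) with (- (w - lam) * (lam + w)) by ring.
    eapply Rle_trans; [apply Rle_abs|]. rewrite Rabs_mult, Rabs_Ropp.
    apply Rmult_le_compat; try apply Rabs_pos; try lra.
    apply Rabs_le; lra. }
  assert (B3 : th * (lam ^ 2 - w ^ 2) <= a / 8).
  { assert (thM * (del * K) <= a / 8).
    { replace (a / 8) with (thM * (a / (8 * thM))) by (field; lra). nra. }
    destruct (Rle_dec 0 (lam ^ 2 - w ^ 2)); nra. }
  lra.
Qed.
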